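(* Let $X$ be a continuum and $T\subset X$ a thick subcontinuum. Then $T$ contains every null-aposyndetic point of $X$.
   Context: A continuum is a nondegenerate compact connected Hausdorff space. A subcontinuum $T\subset X$ is thick if $T\neq X$ and $T$ has nonempty interior. A point $x\in X$ is null-aposyndetic if no proper subcontinuum of $X$ contains $x$ in its interior. *)

(* Defs.v *)
From HB Require Import structures.
From mathcomp Require Import all_boot all_order all_algebra.
From mathcomp Require Import all_classical all_reals all_analysis.
Set Implicit Arguments. Unset Strict Implicit. Unset Printing Implicit Defensive.
Local Open Scope classical_set_scope.

Definition continuum (X : topologicalType) : Prop :=
  [/\ hausdorff_space X, compact [set: X], connected [set: X]
    & exists a b : X, a <> b].

(* A subcontinuum: a subset which is itself a continuum (subspace topology):
   nondegenerate, compact, connected (Hausdorffness is inherited). *)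
Definition subcontinuum (X : topologicalType) (A : set X) : Prop :=
  [/\ compact A, connected A & exists a b, A a /\ A b /\ a <> b].

Definition thick (X : topologicalType) (T : set X) : Prop :=
  [/\ subcontinuum T, T != [set: X] & (interior T) !=set0].

Definition null_aposyndetic (X : topologicalType) (x : X) : Prop :=
  forall A : set X, subcontinuum A -> A != [set: X] -> ~ (interior A) x.

(* Main.v *)
Require Import Defs.
From mathcomp Require Import all_boot all_order all_algebra.
From mathcomp Require Import all_classical all_reals all_analysis.
Local Open Scope classical_set_scope.

Section Helpers.
Context {X : topologicalType}.

Lemma clopen_full (hconn : connected [set: X]) (B : set X) :
  B !=set0 -> open B -> closed B -> B = setT.
Proof.
move=> B0 oB cB; apply: hconn => //.
  by exists B => //; rewrite setTI.
by exists B => //; rewrite setTI.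
Qed.

Lemma int_of_open (A W : set X) (y : X) : open W -> W y -> W `<=` A -> interior A y.
Proof.
move=> oW Wy WA; have := WA; rewrite (open_subsetE _ oW); exact.
Qed.

Lemma normal_sep (hH : hausdorff_space X) (hc : compact [set: X]) (A B : set X) :
  closed A -> closed B -> A `&` B = set0 ->
  exists U V, [/\ open U, open V, A `<=` U, B `<=` V & U `&` V = set0].
Proof.
move=> cA cB AB.
have N := compact_normal hH hc cA.
have nb : set_nbhs A (~` B).
  apply/set_nbhsP; exists (~` B); split => //; first exact: closed_openC.
  by move=> y Ay By; have : (A `&` B) y by []; rewrite AB.
have [D sD cD] := N _ nb.
move/set_nbhsP: sD => [U [oU AU UD]].
exists U, (~` closure D); split => //.
- exact/closed_openC/closed_closure.
- by move=> y By /cD.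
- apply/seteqP; split => // y [Uy]; apply; apply: subset_closure; exact: UD.
Qed.

Lemma conn_union (hconn : connected [set: X]) (T K W : set X) :
  connected T -> T !=set0 -> closed (T `|` K) -> open W ->
  K `\` T `<=` W -> W `<=` T `|` K -> connected (T `|` K).
Proof.
move=> cT [t Tt] cTK oW KW WTK.
have key : forall A B, separated A B -> T `|` K = A `|` B -> T `<=` A ->
    B !=set0 -> False.
  move=> A B sep eq TA B0.
  have dAB := separated_disjoint sep.
  have [sep1 sep2] := sep.
  have cB : closed B.
    move=> y cy.
    have : (T `|` K) y.
      by apply: cTK; apply: closureS cy; rewrite eq; move=> z Bz; right.
    rewrite eq => -[Ay|//].
    by have : (A `&` closure B) y by []; rewrite sep2.
  have oB : open B.
    have -> : B = W `&` ~` closure A.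
      apply/seteqP; split => y.
        move=> By; split; last first.
          by move=> cAy; have : (closure A `&` B) y by []; rewrite sep1.
        apply: KW; split.
          have : (T `|` K) y by rewrite eq; right.
          case=> // Ty; have : (A `&` B) y by split => //; exact: TA.
          by rewrite dAB.
        move=> Ty; have : (A `&` B) y by split => //; exact: TA.
        by rewrite dAB.
      move=> [Wy ncA]; have : (A `|` B) y by rewrite -eq; exact: WTK.
      by case=> // Ay; exfalso; apply: ncA; exact: subset_closure.
    apply: openI => //; exact/closed_openC/closed_closure.
  have BT := @clopen_full hconn B B0 oB cB.
  have : (A `&` B) t by split; [exact: TA | rewrite BT].
  by rewrite dAB.
apply/connectedP => E [E0 EU sep].
have [] := connected_subset sep (_ : T `<=` E false `|` E true) cT.
- by rewrite -EU => y Ty; left.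
- by move=> TE; apply: (key _ _ sep EU TE (E0 true)).
- move=> TE; apply: (key (E true) (E false)); last 2 first.
  + exact: TE.
  + exact: E0.
  + by rewrite separatedC.
  + by rewrite EU setUC.
Qed.

End Helpers.

Theorem mainTheorem16 (X : topologicalType) (hX : continuum X) (T : set X)
  (hT : thick T) (x : X) (hx : null_aposyndetic x) : T x.
Proof.
have [hH hc hconn [a0 [b0 ab0]]] := hX.
have [hsub TneqT [z0 Oz0]] := hT.
have [cT connT [a [b [Ta [Tb ab]]]]] := hsub.
have clT : closed T := compact_closed hH cT.
have [//|nTx] := pselect (T x).
exfalso.
set O := interior T.
set Z := ~` O.
have OT : O `<=` T := @interior_subset _ T.
have Zx : Z x by move=> /OT.
have clZ : closed Z by apply: open_closedC; exact: open_interior.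
pose rc := fun K : set X => [/\ closed K, K `<=` Z, closed (Z `\` K) & K x].
pose Q := \bigcap_(K in rc) K.
have rcZ : rc Z by split => //; rewrite setDv; exact: closed0.
have rcI : forall K1 K2, rc K1 -> rc K2 -> rc (K1 `&` K2).
  move=> K1 K2 [c1 s1 d1 x1] [c2 s2 d2 x2]; split.
  - exact: closedI.
  - by move=> y [/s1].
  - by rewrite setDIr; exact: closedU.
  - by split.
have step1 : forall K, rc K -> T `|` K = setT.
  move=> K [cK KZ cZK Kx].
  have [//|neq] := pselect (T `|` K = setT).
  exfalso; apply: (hx (T `|` K)).
  - split.
    + apply: compactU => //; exact: (subclosed_compact cK hc).
    + apply: (@conn_union X hconn T K (~` T `&` ~` (Z `\` K))) => //.
      * by exists a.
      * exact: closedU.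
      * by apply: openI; apply: closed_openC.
      * by move=> y [Ky nTy]; split => // -[].
      * move=> y [nTy nZKy]; right.
        have [//|nKy] := pselect (K y).
        by exfalso; apply: nZKy; split => // /OT.
    + by exists a, b; split; [left|split; [left|]].
  - by apply/eqP.
  - apply: (@int_of_open _ _ (~` T `&` ~` (Z `\` K))).
    + by apply: openI; apply: closed_openC.
    + by split => // -[].
    + move=> y [nTy nZKy]; right.
      have [//|nKy] := pselect (K y).
      by exfalso; apply: nZKy; split => // /OT.
have QT : ~` T `<=` Q.
  move=> y nTy K rcK; have : (T `|` K) y by rewrite step1.
  by case.
have QZ : Q `<=` Z by move=> y /(_ Z rcZ).
have clQ : closed Q by apply: closed_bigI => K [].
have Qx : Q x by move=> K [].
have QAB : forall A B, separated A B -> Q = A `|` B -> A x -> B !=set0 -> False.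
  move=> A B sep eq Ax [y0 By0].
  have [sep1 sep2] := sep.
  have dAB := separated_disjoint sep.
  have cA : closed A.
    move=> y cy; have : Q y.
      by apply: clQ; apply: closureS cy; rewrite eq => z Az; left.
    rewrite eq => -[//|By].
    by have : (closure A `&` B) y by []; rewrite sep1.
  have cB : closed B.
    move=> y cy; have : Q y.
      by apply: clQ; apply: closureS cy; rewrite eq => z Bz; right.
    rewrite eq => -[Ay|//].
    by have : (A `&` closure B) y by []; rewrite sep2.
  have [U [V [oU oV AU BV UV]]] := @normal_sep X hH hc A B cA cB dAB.
  have QUV : Q `<=` U `|` V.
    by rewrite eq => z [/AU|/BV]; [left|right].
  have [K rcK KUV] : exists2 K, rc K & K `<=` U `|` V.
    apply: contrapT => nex.
    pose W := ~` (U `|` V).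
    have cW : closed W by apply: open_closedC; exact: openU.
    have nonempty : forall K, rc K -> (K `&` W) !=set0.
      move=> K rcK; apply/set0P/negP => /eqP KW0.
      apply: nex; exists K => // z Kz.
      have [//|nz] := pselect ((U `|` V) z).
      by have : (K `&` W) z by []; rewrite KW0.
    have FF : Filter (filter_from rc (fun K => K `&` W)).
      apply: filter_from_filter; first by exists Z.
      move=> K1 K2 r1 r2; exists (K1 `&` K2); first exact: rcI.
      by move=> z [[k1 k2] wz].
    have PF : ProperFilter (filter_from rc (fun K => K `&` W)).
      exact: filter_from_proper.
    have [p [_ clp]] := hc _ PF filterT.
    have pK : forall K, rc K -> (K `&` W) p.
      move=> K rcK; rewrite clusterE in clp.
      have : closure (K `&` W) p.
        by apply: clp; exists K.
      have : closed (K `&` W) by apply: closedI => //; case: rcK.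
      by move=> /closure_id <-.
    have Qp : Q p by move=> K /pK [].
    have [_ Wp] := pK Z rcZ.
    by apply: Wp; apply: QUV.
  have [cK KZ cZK Kx] := rcK.
  have rcKU : rc (K `&` U).
    split.
    - have -> : K `&` U = K `&` ~` V.
        apply/seteqP; split => z [Kz].
          by move=> Uz; split => // Vz; have : (U `&` V) z by []; rewrite UV.
        by move=> nVz; split => //; have [] := KUV _ Kz.
      by apply: closedI => //; exact: open_closedC.
    - by move=> z [/KZ].
    - have -> : Z `\` (K `&` U) = (Z `\` K) `|` (K `&` ~` U).
        apply/seteqP; split => z.
          move=> [Zz nKUz]; have [Kz|nKz] := pselect (K z).
            by right; split => // Uz; apply: nKUz.
          by left.
        case=> [[Zz nKz]|[Kz nUz]]; split => //.
        + by case.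
        + exact: KZ.
        + by case.
      by apply: closedU => //; apply: closedI => //; exact: open_closedC.
    - by split => //; apply: AU.
  have Qy0 : Q y0 by rewrite eq; right.
  have [_ Uy0] := Qy0 _ rcKU.
  have : (U `&` V) y0 by split => //; exact: BV.
  by rewrite UV.
have connQ : connected Q.
  apply/connectedP => E [E0 EU sep].
  have : (E false `|` E true) x by rewrite -EU.
  case=> Ex.
  - exact: (QAB _ _ sep EU Ex (E0 true)).
  - apply: (QAB (E true) (E false)) => //.
    + by rewrite separatedC.
    + by rewrite EU setUC.
have [y [Qy yx]] : exists y, Q y /\ y <> x.
  apply: contrapT => ne.
  have eqx : ~` T = [set x].
    apply/seteqP; split => z.
      move=> nTz; apply: contrapT => zx; apply: ne; exists z; split => //.
      exact: QT.
    by move=> ->.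
  have allT : ~` T = setT.
    apply: (@clopen_full X hconn).
    - by exists x.
    - exact: closed_openC.
    - rewrite eqx; exact: (accessible_closed_set1 (hausdorff_accessible hH)).
  have : (~` T) a by rewrite allT.
  by apply.
apply: (hx Q).
- split => //.
  + exact: (subclosed_compact clQ hc).
    by exists x, y; split => //; split => //; apply: nesym.
- apply/eqP => QTT.
  have : Q z0 by rewrite QTT.
  by move/QZ; apply.
- apply: (@int_of_open _ _ (~` T)) => //.
  exact: closed_openC.
Qed.
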